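(* Let $E(u,v)=\sum_{p\geq0,q\geq1}E_{p,q}(t)u^pv^q$, where $E_{p,q}(t)=\sum_{n\geq1}|\{e\in\mathbf{I}_n(\geq,\geq,-): e\text{ has parameters }(p,q)\}|\,t^n$. Then $$\Bigl(1+\frac{tv}{1-u}+\frac{tv}{1-v/u}\Bigr)E(u,v)=tuv+\frac{tv}{1-u}E(1,v)+\frac{tv}{1-v/u}E(u,u).$$
   Context: $\mathbf{I}_n$ is the set of inversion sequences $e=(e_1,\ldots,e_n)$ with $0\leq e_i<i$; $\mathbf{I}_n(\geq,\geq,-)$ is the set of $e\in\mathbf{I}_n$ with no $i<j<k$ such that $e_i\geq e_j\geq e_k$. An entry $e_i$ is a left-to-right maximum if $e_i>e_j$ for all $j<i$. Let $\alpha(e)=\max_i e_i$ and $\beta(e)$ the largest element of $\{e_i: e_i\text{ not a left-to-right maximum}\}\cup\{-1\}$. The parameters of $e\in\mathbf{I}_n(\geq,\geq,-)$ are $(p,q)=(\alpha(e)-\beta(e),\,n-\alpha(e))$. $E(u,v)$ is a formal power series in $t$ whose coefficients are polynomials in $u,v$. *)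

(* Defs.v *)
From HB Require Import structures.
From mathcomp Require Import all_boot all_order all_algebra.
From mathcomp Require Import fraction.
Set Implicit Arguments. Unset Strict Implicit. Unset Printing Implicit Defensive.
Import Order.TTheory GRing.Theory Num.Theory.

(* Inversion sequences of length n, 0-indexed: e = (e_0,...,e_{n-1}) with
   e_i <= i (i.e. the paper's 0 <= e_{i+1} < i+1).  Entries are stored in 'I_n. *)
Definition inv_seq n (e : n.-tuple 'I_n) : bool :=
  [forall i : 'I_n, (tnth e i <= i)%N].

Definition avoids_gege n (e : n.-tuple 'I_n) : bool :=
  [forall i : 'I_n, forall j : 'I_n, forall k : 'I_n,
     ((i < j)%N && (j < k)%N) ==>
     ~~ ((tnth e j <= tnth e i)%N && (tnth e k <= tnth e j)%N)].

Definition ltrmax n (e : n.-tuple 'I_n) (i : 'I_n) : bool :=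
  [forall j : 'I_n, (j < i)%N ==> (tnth e j < tnth e i)%N].

Definition alpha n (e : n.-tuple 'I_n) : nat := \max_(i : 'I_n) tnth e i.

Definition beta n (e : n.-tuple 'I_n) : int :=
  if [exists i : 'I_n, ~~ ltrmax e i]
  then Posz (\max_(i : 'I_n | ~~ ltrmax e i) tnth e i)%N
  else (-1)%R.

Definition pparam n (e : n.-tuple 'I_n) : int := (Posz (alpha e) - beta e)%R.
Definition qparam n (e : n.-tuple 'I_n) : int := (Posz n - Posz (alpha e))%R.

Local Open Scope ring_scope.

(* Coefficient of t^n in E(x,y):  E_n(x,y) = sum_{p,q} #{e in I_n(>=,>=,-) with
   parameters (p,q)} x^p y^q, for n >= 1; the series starts at n = 1. *)
Definition Ecoef (F : fieldType) (x y : F) (n : nat) : F :=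
  if n is 0 then 0 else
  \sum_(e : n.-tuple 'I_n | inv_seq e && avoids_gege e)
      x ^ pparam e * y ^ qparam e.

(* The field of rational functions in u, v over Q, with indeterminates u, v. *)
Definition RF := {fraction {poly {poly rat}}}.
Definition uu : RF := FracField.tofrac (('X : {poly rat})%:P).
Definition vv : RF := FracField.tofrac ('X : {poly {poly rat}}).

Definition Etrunc (x y : RF) (N : nat) : {poly RF} := \poly_(n < N) Ecoef x y n.

(* Main.v *)
Require Import Defs.
From HB Require Import structures.
From mathcomp Require Import all_boot all_order all_algebra.
From mathcomp Require Import fraction.
From mathcomp Require Import ring lra zify.
Set Implicit Arguments. Unset Strict Implicit. Unset Printing Implicit Defensive.

Definition Bn n (e : n.-tuple 'I_n) : nat := \max_(i | ~~ ltrmax e i) (tnth e i).+1.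

Lemma alpha_le n (e : n.-tuple 'I_n) : (alpha e <= n)%N.
Proof. by apply/bigmax_leqP => i _; apply: ltnW. Qed.

Lemma B_le n (e : n.-tuple 'I_n) : (Bn e <= (alpha e).+1)%N.
Proof. by apply/bigmax_leqP => i _; rewrite ltnS; apply: leq_bigmax. Qed.

Lemma beta_B n (e : n.-tuple 'I_n) : beta e = (Posz (Bn e) - 1)%R.
Proof.
rewrite /beta /Bn; case: existsP => [[i0 Hi0]|H].
  have [i1 Hi1 Hm] := @eq_bigmax_cond _ (fun i => ~~ ltrmax e i) (fun i => nat_of_ord (tnth e i)) (ltac:(by apply/card_gt0P; exists i0)).
  have {Hi1}Hi1 : ~~ ltrmax e i1 := Hi1.
  have Hm' : (\max_(i | ~~ ltrmax e i) tnth e i)%N = tnth e i1.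
    by rewrite -Hm; apply: eq_bigl.
  rewrite Hm'.
  have -> : (\max_(i | ~~ ltrmax e i) (tnth e i).+1 = (tnth e i1).+1)%N.
    apply/eqP; rewrite eqn_leq; apply/andP; split.
      apply/bigmax_leqP => i Hi; rewrite ltnS.
      have := @leq_bigmax_cond _ (fun i => ~~ ltrmax e i) (fun i => nat_of_ord (tnth e i)) i Hi.
      by rewrite Hm'.
    exact: (@leq_bigmax_cond _ (fun i => ~~ ltrmax e i) (fun i => (tnth e i).+1) i1 Hi1).
  by rewrite -addn1 PoszD GRing.addrK.
rewrite big_pred0 //= => i; apply/negbTE/negP => Hi; apply: H; by exists i.
Qed.

Lemma W_eq (F : fieldType) (x y : F) n (e : n.-tuple 'I_n) :
  (x ^ pparam e * y ^ qparam e = x ^+ ((alpha e).+1 - Bn e) * y ^+ (n - alpha e))%R.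
Proof.
rewrite /pparam /qparam beta_B subzn ?alpha_le //.
have -> : (Posz (alpha e) - (Posz (Bn e) - 1))%R = Posz ((alpha e).+1 - Bn e).
  have := B_le e; lia.
by [].
Qed.

Definition wid {k : nat} (i : 'I_k.+1) : 'I_k.+2 := widen_ord (leqnSn _) i.
Definition ext {k : nat} (e : k.+1.-tuple 'I_k.+1) (z : 'I_k.+2) : k.+2.-tuple 'I_k.+2 :=
  [tuple (if (i < k.+1)%N then wid (tnth e (inord i)) else z) | i < k.+2].
Definition trunc {k : nat} (e' : k.+2.-tuple 'I_k.+2) : k.+1.-tuple 'I_k.+1 :=
  [tuple (inord (tnth e' (wid j)) : 'I_k.+1) | j < k.+1].

Lemma split_ord {k : nat} (i : 'I_k.+2) : {j : 'I_k.+1 | i = wid j} + {i = ord_max}.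
Proof.
case: (unliftP ord_max i) => [j ->|->]; last by right.
by left; exists j; apply: val_inj; rewrite /= /bump leqNgt ltn_ord.
Qed.

Lemma forall_split {k : nat} (P : pred 'I_k.+2) :
  [forall i, P i] = [forall j : 'I_k.+1, P (wid j)] && P ord_max.
Proof.
apply/forallP/andP => [H|[/forallP H1 H2] i]; first by split => //; apply/forallP.
by case: (split_ord i) => [[j ->]|->].
Qed.

Lemma tnth_ext_wid {k : nat} (e : k.+1.-tuple 'I_k.+1) (z : 'I_k.+2) (j : 'I_k.+1) : tnth (ext e z) (wid j) = wid (tnth e j).
Proof. by rewrite tnth_mktuple /= ltn_ord inord_val. Qed.

Lemma tnth_ext_max {k : nat} (e : k.+1.-tuple 'I_k.+1) (z : 'I_k.+2) : tnth (ext e z) ord_max = z.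
Proof. by rewrite tnth_mktuple /= ltnn. Qed.

Lemma ltrmax_ext_wid {k : nat} (e : k.+1.-tuple 'I_k.+1) (z : 'I_k.+2) (i : 'I_k.+1) : ltrmax (ext e z) (wid i) = ltrmax e i.
Proof.
rewrite /ltrmax forall_split /=.
have -> : (k.+1 < i)%N = false by apply/negbTE; rewrite -leqNgt; apply: ltnW.
rewrite andbT.
apply: eq_forallb => j. rewrite !tnth_ext_wid. by [].
Qed.

Lemma ltrmax_ext_max {k : nat} (e : k.+1.-tuple 'I_k.+1) (z : 'I_k.+2) : ltrmax (ext e z) ord_max = (alpha e < z)%N.
Proof.
rewrite /ltrmax forall_split /= ltnn implyFb andbT tnth_ext_max.
have Hle : forall j, (tnth e j <= alpha e)%N.
  by move=> j; apply: (@leq_bigmax _ (fun i => nat_of_ord (tnth e i))).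
have [i0 Hi0] := @eq_bigmax _ (fun i => nat_of_ord (tnth e i)) (ltac:(by rewrite card_ord)).
have {Hi0}Hi0 : alpha e = tnth e i0 := Hi0.
apply/forallP/idP => [H|H j].
  by have := H i0; rewrite ltn_ord /= tnth_ext_wid Hi0.
by rewrite ltn_ord /= tnth_ext_wid /=; apply: leq_ltn_trans (Hle j) H.
Qed.

Lemma alpha_ext {k : nat} (e : k.+1.-tuple 'I_k.+1) (z : 'I_k.+2) : alpha (ext e z) = maxn (alpha e) z.
Proof.
rewrite /alpha big_ord_recr /= tnth_ext_max; congr maxn.
by apply: eq_bigr => i _; rewrite -[widen_ord _ i]/(wid i) tnth_ext_wid.
Qed.

Lemma B_ext {k : nat} (e : k.+1.-tuple 'I_k.+1) (z : 'I_k.+2) : Bn (ext e z) = maxn (Bn e) (if (alpha e < z)%N then 0 else z.+1).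
Proof.
rewrite /Bn big_mkcond big_ord_recr /= -[ord_max]/(@ord_max k.+1) ltrmax_ext_max tnth_ext_max.
congr maxn; last by case: ltnP.
rewrite [RHS]big_mkcond; apply: eq_bigr => i _.
by rewrite -[widen_ord _ i]/(wid i) ltrmax_ext_wid tnth_ext_wid.
Qed.

Lemma inv_ext {k : nat} (e : k.+1.-tuple 'I_k.+1) (z : 'I_k.+2) : inv_seq (ext e z) = inv_seq e.
Proof.
rewrite /inv_seq forall_split tnth_ext_max -ltnS ltn_ord andbT.
by apply: eq_forallb => j; rewrite tnth_ext_wid.
Qed.

Lemma trunc_ext {k : nat} (e : k.+1.-tuple 'I_k.+1) (z : 'I_k.+2) : trunc (ext e z) = e.
Proof.
by apply: eq_from_tnth => j; rewrite tnth_mktuple tnth_ext_wid /= inord_val.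
Qed.

Lemma ext_trunc {k : nat} (e' : k.+2.-tuple 'I_k.+2) : inv_seq e' -> ext (trunc e') (tnth e' ord_max) = e'.
Proof.
move=> /forallP He; apply: eq_from_tnth => i.
case: (split_ord i) => [[j ->]|->]; last by rewrite tnth_ext_max.
rewrite tnth_ext_wid tnth_mktuple; apply: val_inj => /=.
by rewrite inordK //; apply: leq_ltn_trans (He (wid j)) (ltn_ord j).
Qed.


Lemma avoid_ext {k : nat} (e : k.+1.-tuple 'I_k.+1) (z : 'I_k.+2) : avoids_gege (ext e z) = avoids_gege e && (Bn e <= z)%N.
Proof.
apply/idP/andP => [H|[Ha Hb]].
  split.
    apply/forallP => i; apply/forallP => j; apply/forallP => l.
    have := forallP (forallP (forallP H (wid i)) (wid j)) (wid l).
    by rewrite !tnth_ext_wid.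
  apply/bigmax_leqP => i /forallPn [j]; rewrite negb_imply -leqNgt => /andP [Hji Hij].
  have := forallP (forallP (forallP H (wid j)) (wid i)) ord_max.
  rewrite !tnth_ext_wid tnth_ext_max /= Hji ltn_ord /= Hij /= -ltnNge.
  by [].
apply/forallP => i; apply/forallP => j; apply/forallP => l; apply/implyP => /andP [Hij Hjl].
case: (split_ord l) => [[l0 El]|El]; subst l.
  case: (split_ord j) => [[j0 Ej]|Ej]; subst j; last first.
    by exfalso; move: Hjl => /=; rewrite ltnNge ltnW.
  case: (split_ord i) => [[i0 Ei]|Ei]; subst i; last first.
    by exfalso; move: Hij => /=; rewrite ltnNge ltnW.
  rewrite !tnth_ext_wid /=.
  by have := forallP (forallP (forallP Ha i0) j0) l0; rewrite Hij Hjl.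
case: (split_ord j) => [[j0 Ej]|Ej]; subst j; last first.
  by exfalso; move: Hjl => /=; rewrite ltnn.
case: (split_ord i) => [[i0 Ei]|Ei]; subst i; last first.
  by exfalso; move: Hij => /=; rewrite ltnNge ltnW.
rewrite !tnth_ext_wid tnth_ext_max /=; apply/andP => [[H1 H2]].
have Hn : ~~ ltrmax e j0.
  by apply/forallPn; exists i0; rewrite negb_imply Hij /= -leqNgt.
move/bigmax_leqP: Hb => Hb; have := Hb j0 Hn.
by rewrite ltnNge H2.
Qed.



Import GRing.Theory.
Local Open Scope ring_scope.

Lemma uu_neq0 : uu != 0.
Proof. by rewrite /uu tofrac_eq0 polyC_eq0 polyX_eq0. Qed.

Lemma oneBuu_neq0 : 1 - uu != 0.
Proof.
have -> : 1 - uu = FracField.tofrac (1 - ('X : {poly rat})%:P) by rewrite rmorphB rmorph1.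
rewrite tofrac_eq0 -[1 : {poly {poly rat}}]/((1 : {poly rat})%:P) -polyCB polyC_eq0.
by rewrite -opprB oppr_eq0 -[1 : {poly rat}]/(1%:P) polyXsubC_eq0.
Qed.

Lemma uuBvv_neq0 : uu - vv != 0.
Proof.
rewrite /uu /vv -rmorphB tofrac_eq0 -opprB oppr_eq0 polyXsubC_eq0 //.
Qed.

Lemma geo1 (F : fieldType) (u : F) (A B : nat) : (B <= A.+1)%N ->
  (1 - u) * \sum_(B <= z < A.+1) u ^+ (A - z) = 1 - u ^+ (A.+1 - B).
Proof.
move eq_d : (A.+1 - B)%N => d; elim: d B eq_d => [|d IH] B Hd HB.
  have -> : B = A.+1 by lia.
  by rewrite big_geq_mkord big_pred0 ?mulr0 ?expr0 ?subrr // => i; rewrite leqNgt ltn_ord.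
rewrite big_ltn; last by lia.
rewrite mulrDr IH; [|lia..].
have -> : (A - B = d)%N by lia.
by rewrite exprS; ring.
Qed.

Lemma geo2 (F : fieldType) (u v : F) (B lo hi : nat) : (B <= lo)%N -> (lo <= hi)%N ->
  (u - v) * \sum_(lo <= z < hi) u ^+ (z.+1 - B) * v ^+ (hi - z)
   = v * u ^+ (lo.+1 - B) * (u ^+ (hi - lo) - v ^+ (hi - lo)).
Proof.
move eq_d : (hi - lo)%N => d; elim: d lo eq_d => [|d IH] lo Hd HB Hlh.
  have -> : lo = hi by lia.
  by rewrite big_geq_mkord big_pred0 ?mulr0 ?expr0 ?subrr ?mulr0 // => i; rewrite leqNgt ltn_ord.
rewrite big_ltn; last by lia.
rewrite mulrDr IH; [|lia..].
have -> : (lo.+2 - B = (lo.+1 - B).+1)%N by lia.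
have -> : (hi - lo = d.+1)%N by lia.
by rewrite !exprS; ring.
Qed.
Lemma alg_id (F : fieldType) (u v U V W S1 S2 : F) : 1 - u != 0 -> u - v != 0 -> u != 0 ->
  (1 - u) * S1 = 1 - U -> (u - v) * S2 = v * (u * U) * (W - V) ->
  S1 * (v * V) + S2 + v / (1 - u) * (U * V) + v / (1 - v / u) * (U * V)
  = v / (1 - u) * (1 * V) + v / (1 - v / u) * (U * W).
Proof.
move=> n1 n2 n3 h1 h2.
have -> : S1 = (1 - U) / (1 - u) by rewrite -h1 [(1 - u) * S1]mulrC mulfK.
have -> : S2 = v * (u * U) * (W - V) / (u - v) by rewrite -h2 [(u - v) * S2]mulrC mulfK.
have -> : 1 - v / u = (u - v) / u by field.
field.
by rewrite n2 n3 n1.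
Qed.

Lemma Erec (F : fieldType) (x y : F) k :
  Ecoef x y k.+2 = \sum_(e : k.+1.-tuple 'I_k.+1 | inv_seq e && avoids_gege e)
     \sum_(z : 'I_k.+2 | (Bn e <= z)%N) (x ^ pparam (ext e z) * y ^ qparam (ext e z)).
Proof.
rewrite /Ecoef.
rewrite (partition_big (@trunc k) (fun e => inv_seq e && avoids_gege e)); last first.
  move=> e' /andP[Hi Ha]; have E := ext_trunc Hi.
  rewrite -E inv_ext in Hi; rewrite -E avoid_ext in Ha.
  by rewrite Hi; case/andP: Ha.
apply: eq_bigr => e /andP[Hi Ha].
rewrite (reindex_onto (@ext k e) (fun e' => tnth e' ord_max)); last first.
  by move=> e' /andP[/andP[Hi' _] /eqP <-]; apply: ext_trunc.
apply: eq_bigl => z.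
by rewrite inv_ext avoid_ext trunc_ext tnth_ext_max !eqxx Hi Ha /= !andbT.
Qed.

Lemma W_ext (F : fieldType) (x y : F) k (e : k.+1.-tuple 'I_k.+1) (z : 'I_k.+2) :
  (Bn e <= z)%N ->
  x ^ pparam (ext e z) * y ^ qparam (ext e z) =
  if (z <= alpha e)%N then x ^+ (alpha e - z) * y ^+ (k.+2 - alpha e)
  else x ^+ (z.+1 - Bn e) * y ^+ (k.+2 - z).
Proof.
move=> Hz; rewrite W_eq alpha_ext B_ext.
case: leqP => Hza.
  have -> : maxn (Bn e) z.+1 = z.+1 by apply/maxn_idPr; apply: leqW.
  by rewrite subSS.
by rewrite maxn0.
Qed.

Lemma child_sum (F : fieldType) (x y : F) k (e : k.+1.-tuple 'I_k.+1) :
  \sum_(z : 'I_k.+2 | (Bn e <= z)%N) (x ^ pparam (ext e z) * y ^ qparam (ext e z)) =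
  (\sum_(Bn e <= z < (alpha e).+1) x ^+ (alpha e - z)) * y ^+ (k.+2 - alpha e)
  + \sum_((alpha e).+1 <= z < k.+2) x ^+ (z.+1 - Bn e) * y ^+ (k.+2 - z).
Proof.
have HB := B_le e; have HA := alpha_le e.
rewrite (eq_bigr (fun z : 'I_k.+2 => (fun z : nat => if (z <= alpha e)%N then x ^+ (alpha e - z) * y ^+ (k.+2 - alpha e)
  else x ^+ (z.+1 - Bn e) * y ^+ (k.+2 - z)) z)); last by move=> z Hz; apply: W_ext.
rewrite (eq_bigl (fun i : 'I_k.+2 => xpredT (nat_of_ord i) && (Bn e <= i)%N)) //.
rewrite -(big_geq_mkord (Bn e) k.+2 xpredT (fun z : nat => if (z <= alpha e)%N then x ^+ (alpha e - z) * y ^+ (k.+2 - alpha e)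
  else x ^+ (z.+1 - Bn e) * y ^+ (k.+2 - z))).
rewrite [LHS](@big_cat_nat _ _ _ (alpha e).+1) //;  
rewrite mulr_suml /=; congr (_ + _); apply: eq_big_nat => z /andP[H1 H2].
  by rewrite -ltnS H2.
by rewrite leqNgt H1.
Qed.

Lemma per_e (F : fieldType) (u v : F) (nz1 : 1 - u != 0) (nz2 : u - v != 0) (nz3 : u != 0)
  k (e : k.+1.-tuple 'I_k.+1) :
  let a := v / (1 - u) in let b := v / (1 - v / u) in
  \sum_(z : 'I_k.+2 | (Bn e <= z)%N) (u ^ pparam (ext e z) * v ^ qparam (ext e z))
  + a * (u ^ pparam e * v ^ qparam e) + b * (u ^ pparam e * v ^ qparam e)
  = a * (1 ^ pparam e * v ^ qparam e) + b * (u ^ pparam e * u ^ qparam e).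
Proof.
move=> a b; rewrite child_sum !W_eq.
have HB := B_le e; have HA := alpha_le e.
have h1 := geo1 u HB.
have h2 := @geo2 _ u v (Bn e) (alpha e).+1 k.+2 HB (ltac:(lia)).
rewrite subSS in h2.
have -> : (k.+2 - alpha e = (k.+1 - alpha e).+1)%N by lia.
rewrite (_ : ((alpha e).+2 - Bn e = ((alpha e).+1 - Bn e).+1)%N) in h2; last by lia.
move: h1 h2.
set S1 := \sum_(_ <= _ < _) _.
set S2 := \sum_(_ <= _ < _) _.
set P := ((alpha e).+1 - Bn e)%N; set Q := (k.+1 - alpha e)%N.
rewrite !exprS expr1n.
set U := u ^+ P; set V := v ^+ Q; set W := u ^+ Q.
move=> h1 h2.
exact: alg_id nz1 nz2 nz3 h1 h2.
Qed.

Lemma rec_gen (F : fieldType) (u v : F) (nz1 : 1 - u != 0) (nz2 : u - v != 0) (nz3 : u != 0) k :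
  Ecoef u v k.+2 + v / (1 - u) * Ecoef u v k.+1 + v / (1 - v / u) * Ecoef u v k.+1
  = (if k.+1 == 0%N then u * v else 0) + v / (1 - u) * Ecoef 1 v k.+1 + v / (1 - v / u) * Ecoef u u k.+1.
Proof.
rewrite Erec add0r.
rewrite /Ecoef !mulr_sumr -!big_split.
apply: eq_bigr => e _.
exact: per_e.
Qed.

Lemma ord1_0 (i : 'I_1) : nat_of_ord i = 0%N.
Proof. by case: i => -[]. Qed.

Lemma E1 (F : fieldType) (x y : F) : Ecoef x y 1 = x * y.
Proof.
rewrite /Ecoef.
rewrite (eq_bigr (fun _ => x * y)); last first.
  move=> e _; rewrite W_eq.
  have -> : alpha e = 0%N by apply/eqP; rewrite -leqn0; apply/bigmax_leqP => i _; rewrite ord1_0.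
  have -> : Bn e = 0%N.
    rewrite /Bn big_pred0 // => i; apply/negbTE; rewrite negbK; apply/forallP => j.
    by rewrite !ord1_0.
  by rewrite !expr1.
rewrite (eq_bigl xpredT); last first.
  move=> e; apply/andP; split.
    by apply/forallP => i; rewrite !ord1_0.
  by apply/forallP => i; apply/forallP => j; apply/forallP => l; rewrite !ord1_0.
rewrite sumr_const (_ : #|_| = 1%N) //.
by rewrite cardT -cardT card_tuple card_ord.
Qed.

Lemma coef_gen (F : fieldType) (a b c : F) (f f1 f2 : nat -> F) (N n : nat) :
  (n < N)%N -> f 0%N = 0 ->
  (forall m, (m.+1 < N)%N -> f m.+1 + a * f m + b * f m = (if m == 0%N then c else 0) + a * f1 m + b * f2 m) ->
  ((1 + 'X * a%:P + 'X * b%:P) * \poly_(i < N) f i)`_n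
  = ('X * c%:P + 'X * a%:P * \poly_(i < N) f1 i + 'X * b%:P * \poly_(i < N) f2 i)`_n.
Proof.
move=> HnN H0 Hm.
rewrite !mulrDl mul1r !coefD -!mulrA !coefXM !coefCM coefC !coef_poly HnN.
case: n HnN => [|m] HnN /=; first by rewrite H0 !addr0.
by rewrite (ltnW HnN) Hm.
Qed.

Theorem proposition2p3 (N n : nat) : (n < N)%N ->
  ((1 + 'X * (vv / (1 - uu))%:P + 'X * (vv / (1 - vv / uu))%:P)
     * Etrunc uu vv N)`_n
  = ('X * (uu * vv)%:P
     + 'X * (vv / (1 - uu))%:P * Etrunc 1 vv N
     + 'X * (vv / (1 - vv / uu))%:P * Etrunc uu uu N)`_n.
Proof.
move=> HnN.
apply: (coef_gen HnN); first by [].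
move=> -[|k] _.
  by rewrite E1 /Ecoef !mulr0 !addr0.
exact: (rec_gen oneBuu_neq0 uuBvv_neq0 uu_neq0).
Qed.
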